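(* For every integer $n\ge2$, let $\mathbb{R}^{1,n}$ denote $(n+1)$-dimensional Minkowski space with its causal order. Then $\dim_{DM}(\mathbb{R}^{1,n})=\dim_{HBG}(\mathbb{R}^{1,n})=\aleph_0$, and for all $p,q\in\mathbb{R}^{1,n}$ with $p\ll q$ also $\dim_{DM}(J(p,q))=\dim_{HBG}(J(p,q))=\aleph_0$ (with the induced order). Moreover $\dim_D(\mathbb{R}^{1,n})\ge\aleph_0$ and $\dim_D(J(p,q))\ge\aleph_0$.
   Context: On $\mathbb{R}^{1,n}=\mathbb{R}\times\mathbb{R}^n$ the causal order is $x\le y$ iff $y_0-x_0\ge|\vec y-\vec x|$ (Euclidean norm of the spatial parts); $x\ll y$ iff $y_0-x_0>|\vec y-\vec x|$; $J(p,q):=\{x:p\le x\le q\}$. For a partially ordered set $(X,\le)$: the Dushnik–Miller dimension $\dim_{DM}(X)$ is the least cardinality of a family of total orders on $X$ whose intersection is $\le$. A utility on $X$ is a map $f:X\to\mathbb{R}^I$ with $x\le y\iff f_i(x)\le f_i(y)$ for all $i\in I$; the Hack–Braun–Gottwald dimension $\dim_{HBG}(X)$ is the least cardinality $\#I$ of a utility. A total order on $X$ is Debreu separable if there is a countable $N\subset X$ such that whenever $x\le y$ there is $n\in N$ with $x\le n\le y$; the Debreu dimension $\dim_D(X)$ is the least cardinality of a family of Debreu separable total orders on $X$ whose intersection is $\le$. *)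

(* Defs.v *)
From mathcomp Require Import all_boot all_order all_algebra.
From mathcomp Require Import reals.
Set Implicit Arguments. Unset Strict Implicit. Unset Printing Implicit Defensive.
Import Order.TTheory GRing.Theory Num.Theory.
Local Open Scope ring_scope.

Definition mpoint (R : realType) (n : nat) : Type := (R * ('I_n -> R))%type.

Definition enorm (R : realType) (n : nat) (v : 'I_n -> R) : R :=
  Num.sqrt (\sum_(i < n) v i ^+ 2).

Definition causal_le (R : realType) (n : nat) (x y : mpoint R n) : Prop :=
  enorm (fun i => y.2 i - x.2 i) <= y.1 - x.1.

Definition chron_lt (R : realType) (n : nat) (x y : mpoint R n) : Prop :=
  enorm (fun i => y.2 i - x.2 i) < y.1 - x.1.

Definition Jdiamond (R : realType) (n : nat) (p q : mpoint R n) : Type :=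
  {x : mpoint R n | causal_le p x /\ causal_le x q}.

Definition Jle (R : realType) (n : nat) (p q : mpoint R n)
  (a b : Jdiamond p q) : Prop := causal_le (proj1_sig a) (proj1_sig b).

Definition total_order (X : Type) (L : X -> X -> Prop) : Prop :=
  (forall x, L x x) /\
  (forall x y, L x y -> L y x -> x = y) /\
  (forall x y z, L x y -> L y z -> L x z) /\
  (forall x y, L x y \/ L y x).

Definition realizes (X I : Type) (le : X -> X -> Prop)
  (L : I -> X -> X -> Prop) : Prop :=
  forall x y, le x y <-> (forall i, L i x y).

Definition is_utility (R : realType) (X I : Type) (le : X -> X -> Prop)
  (f : X -> I -> R) : Prop :=
  forall x y, le x y <-> (forall i, f x i <= f y i).

Definition countable_set (X : Type) (N : X -> Prop) : Prop :=
  exists c : X -> nat, forall a b, N a -> N b -> c a = c b -> a = b.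

(* Debreu separable total order (strict reading: for x < y, x <> y) *)
Definition debreu_separable (X : Type) (L : X -> X -> Prop) : Prop :=
  exists N : X -> Prop, countable_set N /\
    forall x y, L x y -> x <> y -> exists m, N m /\ L x m /\ L m y.

Definition dimDM_aleph0 (X : Type) (le : X -> X -> Prop) : Prop :=
  (exists L : nat -> X -> X -> Prop,
      (forall i, total_order (L i)) /\ realizes le L) /\
  (forall (m : nat) (L : 'I_m -> X -> X -> Prop),
      (forall i, total_order (L i)) -> ~ realizes le L).

Definition dimHBG_aleph0 (R : realType) (X : Type) (le : X -> X -> Prop) : Prop :=
  (exists f : X -> nat -> R, is_utility le f) /\
  (forall (m : nat) (f : X -> 'I_m -> R), ~ is_utility le f).

Definition dimD_ge_aleph0 (X : Type) (le : X -> X -> Prop) : Prop :=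
  forall (m : nat) (L : 'I_m -> X -> X -> Prop),
    (forall i, total_order (L i) /\ debreu_separable (L i)) -> ~ realizes le L.
Arguments Jle {R n} p q a b.

(* Main.v *)
Require Import Defs.
From mathcomp Require Import all_boot all_order all_algebra.
From mathcomp Require Import reals.
From mathcomp Require Import ring lra.
From Stdlib Require Import Classical ClassicalEpsilon FunctionalExtensionality ProofIrrelevance.
Set Implicit Arguments. Unset Strict Implicit. Unset Printing Implicit Defensive.
Import Order.TTheory GRing.Theory Num.Theory.
Local Open Scope ring_scope.

Definition Qn (R : realType) (n : nat) (v : 'I_n -> R) : R := \sum_(i < n) v i ^+ 2.
Definition dotp (R : realType) (n : nat) (u v : 'I_n -> R) : R := \sum_(i < n) u i * v i.

Lemma Qn_ge0 (R : realType) n (v : 'I_n -> R) : 0 <= Qn v.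
Proof. by apply: sumr_ge0 => i _; rewrite sqr_ge0. Qed.

Lemma enormE (R : realType) n (v : 'I_n -> R) : enorm v = Num.sqrt (Qn v).
Proof. by []. Qed.

Lemma enorm_ge0 (R : realType) n (v : 'I_n -> R) : 0 <= enorm v.
Proof. exact: sqrtr_ge0. Qed.

Lemma enorm_sq (R : realType) n (v : 'I_n -> R) : enorm v ^+ 2 = Qn v.
Proof. by rewrite enormE sqr_sqrtr // Qn_ge0. Qed.

Lemma Qn_eq0 (R : realType) n (v : 'I_n -> R) : Qn v = 0 -> forall i, v i = 0.
Proof.
move=> h i; have := @psumr_eq0P R _ predT (fun i => v i ^+ 2).
move=> /(_ (fun i _ => sqr_ge0 _) h i isT) /eqP; rewrite sqrf_eq0 => /eqP //.
Qed.

Lemma enorm_eq0 (R : realType) n (v : 'I_n -> R) : enorm v = 0 -> forall i, v i = 0.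
Proof.
move=> h; apply: Qn_eq0; apply/eqP; rewrite eq_le Qn_ge0 andbT.
by rewrite -sqrtr_eq0 -enormE h.
Qed.

Lemma enorm_ext (R : realType) n (u v : 'I_n -> R) : (forall i, u i = v i) -> enorm u = enorm v.
Proof. by move=> h; rewrite !enormE /Qn; congr Num.sqrt; apply: eq_bigr => i _; rewrite h. Qed.

Lemma dotp_CS (R : realType) n (u v : 'I_n -> R) : dotp u v <= enorm u * enorm v.
Proof.
set a := enorm u; set b := enorm v.
have a0 : 0 <= a by apply: enorm_ge0.
have b0 : 0 <= b by apply: enorm_ge0.
have E : \sum_(i < n) (u i * b - v i * a) ^+ 2 = b^+2 * Qn u - 2 * a * b * dotp u v + a^+2 * Qn v.
  rewrite /Qn /dotp !mulr_sumr -sumrB -big_split /=; apply: eq_bigr => i _; ring.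
have S : 0 <= \sum_(i < n) (u i * b - v i * a) ^+ 2 by apply: sumr_ge0 => i _; rewrite sqr_ge0.
rewrite E -/(Qn u) -/(Qn v) -!enorm_sq -/a -/b in S.
have [ab0|] := ltP 0 (a * b).
  have : 2 * a * b * dotp u v <= 2 * a * b * (a * b) by nra.
  by rewrite ler_pM2l //; nra.
move=> ab0; have : a * b = 0 by apply/eqP; rewrite eq_le ab0 mulr_ge0.
move/eqP; rewrite mulf_eq0 => /orP[] /eqP h.
  by rewrite /dotp big1 ?mulr_ge0 // => i _; rewrite (enorm_eq0 h) mul0r.
by rewrite /dotp big1 ?mulr_ge0 // => i _; rewrite (enorm_eq0 h) mulr0.
Qed.

Lemma enorm_triangle (R : realType) n (u v : 'I_n -> R) :
  enorm (fun i => u i + v i) <= enorm u + enorm v.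
Proof.
have a0 := enorm_ge0 u; have b0 := enorm_ge0 v.
have E : Qn (fun i => u i + v i) = Qn u + 2 * dotp u v + Qn v.
  rewrite /Qn /dotp mulr_sumr -!big_split /=; apply: eq_bigr => i _; ring.
have C := dotp_CS u v.
rewrite enormE -(@ger0_norm _ (enorm u + enorm v)) ?addr_ge0 // -sqrtr_sqr.
rewrite ler_sqrt ?sqr_ge0 // E -!enorm_sq; nra.
Qed.

Lemma enorm_scale (R : realType) n (c : R) (v : 'I_n -> R) :
  enorm (fun i => c * v i) = `|c| * enorm v.
Proof.
rewrite !enormE /Qn.
have -> : \sum_(i < n) (c * v i) ^+ 2 = c ^+ 2 * \sum_(i < n) v i ^+ 2.
  by rewrite mulr_sumr; apply: eq_bigr => i _; rewrite exprMn.
by rewrite sqrtrM ?sqr_ge0 // sqrtr_sqr.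
Qed.

Lemma enorm_opp (R : realType) n (v : 'I_n -> R) : enorm (fun i => - v i) = enorm v.
Proof.
rewrite (@enorm_ext _ _ _ (fun i => (-1) * v i)); last by move=> i; rewrite mulN1r.
by rewrite enorm_scale normrN normr1 mul1r.
Qed.



Definition has_std (X : Type) (le : X -> X -> Prop) : Prop :=
  forall k : nat, exists (a b : 'I_k -> X),
    (forall i j, i <> j -> le (a i) (b j)) /\ (forall i, ~ le (a i) (b i)).

Lemma inj_contra m (g : 'I_m.+1 -> 'I_m) : injective g -> False.
Proof. by move=> /leq_card; rewrite !card_ord ltnn. Qed.

Lemma std_no_realizer (X : Type) (le : X -> X -> Prop) : has_std le ->
  forall m (L : 'I_m -> X -> X -> Prop), (forall i, total_order (L i)) -> ~ realizes le L.
Proof.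
move=> H m L HL HR; have [a [b [H1 H2]]] := H m.+1.
have Hc : forall i : 'I_m.+1, exists c, ~ L c (a i) (b i).
  move=> i; apply: not_all_ex_not => Hall; apply: (H2 i); exact: (proj2 (HR _ _)).
pose g i := proj1_sig (constructive_indefinite_description _ (Hc i)).
have gP : forall i, ~ L (g i) (a i) (b i).
  by move=> i; rewrite /g; case: constructive_indefinite_description.
apply: (@inj_contra m g) => i j Eg; case: (eqVneq i j) => // /eqP nij.
exfalso; have [_ [_ [Ht Htot]]] := HL (g i).
have h1 : L (g i) (a i) (b j) by apply: (proj1 (HR _ _)); apply: H1.
have h2 : L (g i) (a j) (b i) by apply: (proj1 (HR _ _)); apply: H1 => e; apply: nij.
have h3 : L (g i) (b j) (a j).
  case: (Htot (a j) (b j)) => // h; exfalso; apply: (gP j); rewrite -Eg; exact: h.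
by apply: (gP i); apply: (Ht _ _ _ h1); apply: (Ht _ _ _ h3).
Qed.

Lemma std_no_utility (X : Type) (le : X -> X -> Prop) : has_std le ->
  forall (R : realType) m (f : X -> 'I_m -> R), ~ is_utility le f.
Proof.
move=> H R m f HU; have [a [b [H1 H2]]] := H m.+1.
have Hc : forall i : 'I_m.+1, exists c, ~ (f (a i) c <= f (b i) c).
  move=> i; apply: not_all_ex_not => Hall; apply: (H2 i); exact: (proj2 (HU _ _)).
pose g i := proj1_sig (constructive_indefinite_description _ (Hc i)).
have gP : forall i, ~ (f (a i) (g i) <= f (b i) (g i)).
  by move=> i; rewrite /g; case: constructive_indefinite_description.
apply: (@inj_contra m g) => i j Eg; case: (eqVneq i j) => // /eqP nij.
exfalso.
have h1 : f (a i) (g i) <= f (b j) (g i) by apply: (proj1 (HU _ _)); apply: H1.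
have h2 : f (a j) (g i) <= f (b i) (g i) by apply: (proj1 (HU _ _)); apply: H1 => e; apply: nij.
have h3 : f (b j) (g i) < f (a j) (g i).
  by rewrite ltNge; apply/negP => h; apply: (gP j); rewrite -Eg.
apply: (gP i); apply: (le_trans h1); apply: (le_trans (ltW h3)); exact: h2.
Qed.

Lemma std_no_debreu (X : Type) (le : X -> X -> Prop) : has_std le -> dimD_ge_aleph0 le.
Proof.
move=> H m L HL; apply: (std_no_realizer H) => i; exact: (proj1 (HL i)).
Qed.



Definition kl (R : realType) (s : seq R) : seqlexi R := s.

Lemma realizer_from_utility (R : realType) (X : Type) (le : X -> X -> Prop)
  (f : X -> nat -> R) (key : X -> seq R) :
  is_utility le f -> injective key ->
  (forall x y, le x y -> (kl (key x) <= kl (key y))%O) ->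
  exists L : nat -> X -> X -> Prop, (forall i, total_order (L i)) /\ realizes le L.
Proof.
move=> HU Hinj Hk.
exists (fun i x y => (kl (f x i :: key x) <= kl (f y i :: key y))%O); split.
  move=> i; split; first by move=> x; exact: le_refl.
  split; first by move=> x y h1 h2; apply: Hinj; have := le_anti (introT andP (conj h1 h2)); case.
  split; first by move=> x y z; exact: le_trans.
  by move=> x y; case/orP: (le_total (kl (f x i :: key x)) (kl (f y i :: key y))); auto.
move=> x y; split.
  move=> hxy i; rewrite /kl lexi_cons.
  have -> : (f x i <= f y i)%O by exact: (proj1 (HU _ _) hxy).
  by rewrite /= (Hk _ _ hxy) implybT.
move=> h; apply: (proj2 (HU _ _)) => i; have := h i; rewrite /kl lexi_cons.
by case/andP.
Qed.



Definition mkey (R : realType) n (x : mpoint R n) : seq R := x.1 :: [seq x.2 i | i <- enum 'I_n].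

Lemma mpoint_eq (R : realType) n (x y : mpoint R n) : x.1 = y.1 -> (forall i, x.2 i = y.2 i) -> x = y.
Proof.
case: x y => [x1 x2] [y1 y2] /= -> h; congr pair; exact: functional_extensionality.
Qed.

Lemma mkey_inj (R : realType) n : injective (@mkey R n).
Proof.
move=> x y [h1 h2]; apply: mpoint_eq => // i.
have := (proj2 (eq_in_map (fun i => x.2 i) (fun i => y.2 i) (enum 'I_n)) h2 i).
by apply; rewrite mem_enum.
Qed.

Lemma causal_time (R : realType) n (x y : mpoint R n) : causal_le x y -> x.1 <= y.1.
Proof. rewrite /causal_le => h; have := enorm_ge0 (fun i => y.2 i - x.2 i); lra. Qed.

Lemma causal_eq (R : realType) n (x y : mpoint R n) : causal_le x y -> x.1 = y.1 -> x = y.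
Proof.
rewrite /causal_le => h e; apply: mpoint_eq => // i.
have h0 : enorm (fun i => y.2 i - x.2 i) = 0.
  by apply/eqP; rewrite eq_le enorm_ge0 andbT; rewrite e subrr in h.
by have := enorm_eq0 h0 i => /eqP; rewrite subr_eq0 => /eqP.
Qed.

Lemma mkey_mono (R : realType) n (x y : mpoint R n) : causal_le x y -> (kl (mkey x) <= kl (mkey y))%O.
Proof.
move=> h; have t := causal_time h.
have [lt|eq] := boolP (x.1 < y.1).
  rewrite /kl /mkey lexi_cons; apply/andP; split; first exact: t.
  by apply/implyP => h2; exfalso; move: lt; rewrite ltNge h2.
have e : x.1 = y.1 by apply/eqP; rewrite eq_le t /=; rewrite -leNgt in eq.
by rewrite (causal_eq h e) le_refl.
Qed.



Lemma coord_sq (R : realType) (c d v dl : R) : d - dl < c -> c < d + dl -> dl <= 1 ->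
  c ^+ 2 <= d ^+ 2 + dl * (d ^+ 2 + v ^+ 2 + 2).
Proof.
move=> h1 h2 h3.
have a : 0 <= (dl - (c - d)) * (d + 1) ^+ 2 by apply: mulr_ge0; [lra | exact: sqr_ge0].
have b : 0 <= (dl + (c - d)) * (d - 1) ^+ 2 by apply: mulr_ge0; [lra | exact: sqr_ge0].
have e2 : (c - d) ^+ 2 <= dl by nra.
have v2 : 0 <= dl * v ^+ 2 by apply: mulr_ge0; [lra | exact: sqr_ge0].
nra.
Qed.

Lemma coord_dot (R : realType) (c d v dl : R) : d - dl < c -> c < d + dl -> dl <= 1 ->
  d * v - dl * (d ^+ 2 + v ^+ 2 + 2) <= c * v.
Proof.
move=> h1 h2 h3.
have a : 0 <= (dl + (c - d)) * (v + 1) ^+ 2 by apply: mulr_ge0; [lra | exact: sqr_ge0].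
have b : 0 <= (dl - (c - d)) * (v - 1) ^+ 2 by apply: mulr_ge0; [lra | exact: sqr_ge0].
have v2 : 0 <= dl * d ^+ 2 by apply: mulr_ge0; [lra | exact: sqr_ge0].
nra.
Qed.

Lemma rat_sep (R : realType) n (v : 'I_n -> R) (t : R) :
  (forall g : {ffun 'I_n -> rat}, Qn (fun i => (ratr (g i) : R)) <= 1 ->
     dotp (fun i => (ratr (g i) : R)) v <= t) -> enorm v <= t.
Proof.
move=> H; rewrite leNgt; apply/negP => lts.
set s := enorm v in lts.
have s0 : 0 <= s by apply: enorm_ge0.
have t0 : 0 <= t.
  have := H [ffun=> 0]; rewrite /Qn /dotp.
  rewrite (eq_bigr (fun _ => 0)); last by move=> i _; rewrite ffunE rmorph0 expr0n.
  rewrite big1_eq ler01 => /(_ isT).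
  by rewrite (eq_bigr (fun _ => 0)) ?big1_eq // => i _; rewrite ffunE rmorph0 mul0r.
have sp : 0 < s by lra.
have Qv : Qn v = s ^+ 2 by rewrite -enorm_sq.
set th := (t + s) / (2 * s).
have th1 : th < 1 by rewrite /th ltr_pdivrMr; lra.
have th0 : 0 <= th by rewrite /th divr_ge0 //; lra.
have ths : th * s = (t + s) / 2 by rewrite /th; field; lra.
set mu := th / s.
pose d i := mu * v i.
have Qd : Qn d = th ^+ 2.
  rewrite /Qn (eq_bigr (fun i => mu ^+ 2 * v i ^+ 2)); last by move=> i _; rewrite /d exprMn.
  by rewrite -mulr_sumr -/(Qn v) Qv /mu; field; lra.
have Dd : dotp d v = (t + s) / 2.
  rewrite /dotp (eq_bigr (fun i => mu * v i ^+ 2)); last by move=> i _; rewrite /d -mulrA.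
  by rewrite -mulr_sumr -/(Qn v) Qv /mu -ths; field; lra.
set S := \sum_(i < n) (d i ^+ 2 + v i ^+ 2 + 2).
have S0 : 0 <= S by apply: sumr_ge0 => i _; have := sqr_ge0 (d i); have := sqr_ge0 (v i); lra.
set ga := (s - t) / (4 * (s + 1)).
have ga0 : 0 < ga by rewrite /ga divr_gt0 //; lra.
have ga1 : ga * (4 * (s + 1)) = s - t by rewrite /ga; field; lra.
have ga2 : ga < 1 - th ^+ 2.
  have : 1 - th = (s - t) / (2 * s) by rewrite /th; field; lra.
  move=> e; have : (1 - th) * (2 * s) = s - t by rewrite e; field; lra.
  nra.
have ga3 : ga < (s - t) / 2 by nra.
have ga4 : ga <= 1 by nra.
set dl := ga / (S + 1).
have dl0 : 0 < dl by rewrite /dl divr_gt0 //; lra.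
have dlS : dl * S <= ga.
  rewrite /dl mulrC mulrA ler_pdivrMr; last lra.
  by rewrite mulrC; apply: ler_wpM2l; lra.
have dl1 : dl <= 1.
  rewrite /dl ler_pdivrMr; last lra. nra.
have [g gP] : exists g : {ffun 'I_n -> rat}, forall i, d i - dl < ratr (g i) < d i + dl.
  have [f fP] : exists f : 'I_n -> rat, forall i, d i - dl < ratr (f i) < d i + dl.
    apply: (@fin_all_exists _ (fun _ => rat) (fun i q => d i - dl < ratr q < d i + dl)) => i.
    have hlt : d i - dl < d i + dl by lra.
    have [q] := rat_in_itvoo hlt.
    by rewrite in_itv /= => h; exists q.
  by exists [ffun i => f i] => i; rewrite ffunE.
pose c i := ratr (g i) : R.
have Qc : Qn c <= 1.
  have : Qn c <= Qn d + dl * S.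
    rewrite /Qn /S mulr_sumr -big_split /=; apply: ler_sum => i _.
    by have /andP[h1 h2] := gP i; apply: coord_sq.
  lra.
have Dc : dotp d v - dl * S <= dotp c v.
  rewrite /dotp /S mulr_sumr -sumrB /=; apply: ler_sum => i _.
  by have /andP[h1 h2] := gP i; apply: coord_dot.
have := H g Qc; rewrite -/(dotp c v). lra.
Qed.



Definition cvec (R : realType) n (k : nat) : 'I_n -> R :=
  match @unpickle {ffun 'I_n -> rat} k with
  | Some g => if Qn (fun i => (ratr (g i) : R)) <= 1 then (fun i => ratr (g i)) else (fun _ => 0)
  | None => fun _ => 0
  end.

Lemma Qn0 (R : realType) n : Qn (fun _ : 'I_n => (0 : R)) = 0.
Proof. by rewrite /Qn big1 // => i _; rewrite expr0n. Qed.

Lemma cvec_Q (R : realType) n k : Qn (@cvec R n k) <= 1.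
Proof.
rewrite /cvec; case: unpickle => [g|]; last by rewrite Qn0 ler01.
by case: ifP => // _; rewrite Qn0 ler01.
Qed.

Lemma enorm_le_iff (R : realType) n (v : 'I_n -> R) t :
  enorm v <= t <-> (forall k, dotp (@cvec R n k) v <= t).
Proof.
split.
  move=> h k; apply: (le_trans (dotp_CS _ _)); apply: le_trans h.
  have c1 : enorm (@cvec R n k) <= 1 by rewrite enormE -sqrtr1 ler_sqrt ?ler01 // cvec_Q.
  have := enorm_ge0 v; have := enorm_ge0 (@cvec R n k); nra.
move=> h; apply: rat_sep => g Qg; have := h (pickle g).
by rewrite /cvec pickleK Qg.
Qed.

Definition mutil (R : realType) n (x : mpoint R n) (k : nat) : R := x.1 - dotp (@cvec R n k) x.2.

Lemma dotpB (R : realType) n (c u w : 'I_n -> R) : dotp c (fun i => u i - w i) = dotp c u - dotp c w.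
Proof. by rewrite /dotp -sumrB; apply: eq_bigr => i _; rewrite mulrBr. Qed.

Lemma mutil_utility (R : realType) n : is_utility (@causal_le R n) (@mutil R n).
Proof.
move=> x y; rewrite /causal_le enorm_le_iff; split => h k; have := h k;
  rewrite /mutil dotpB; lra.
Qed.



Definition v2 (R : realType) n (a b : R) : 'I_n -> R :=
  fun i => if (val i == 0)%N then a else if (val i == 1)%N then b else 0.

Lemma Qn_v2 (R : realType) n (hn : (2 <= n)%N) (a b : R) : Qn (@v2 R n a b) = a ^+ 2 + b ^+ 2.
Proof.
case: n hn => [|[|n]] // _.
rewrite /Qn big_ord_recl big_ord_recl /= big1 ?addr0 //.
move=> i _; rewrite /v2 /=; by rewrite expr0n.
Qed.

Lemma enorm_v2 (R : realType) n (hn : (2 <= n)%N) (a b : R) :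
  enorm (@v2 R n a b) = Num.sqrt (a ^+ 2 + b ^+ 2).
Proof. by rewrite enormE Qn_v2. Qed.

Definition ua (R : realType) (x : R) := (1 - x ^+ 2) / (1 + x ^+ 2).
Definition ub (R : realType) (x : R) := 2 * x / (1 + x ^+ 2).

Lemma circ_id (R : realType) (s r : R) :
  (ua s + ua r) ^+ 2 + (ub s + ub r) ^+ 2 = 4 - 4 * (s - r) ^+ 2 / ((1 + s ^+ 2) * (1 + r ^+ 2)).
Proof.
have hs : 1 + s ^+ 2 != 0 by apply: lt0r_neq0; have := sqr_ge0 s; lra.
have hr : 1 + r ^+ 2 != 0 by apply: lt0r_neq0; have := sqr_ge0 r; lra.
rewrite /ua /ub; field; by apply/andP.
Qed.

Lemma circ_norm (R : realType) (s : R) : ua s ^+ 2 + ub s ^+ 2 = 1.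
Proof.
have hs : 1 + s ^+ 2 != 0 by apply: lt0r_neq0; have := sqr_ge0 s; lra.
rewrite /ua /ub; field; exact: hs.
Qed.

Definition T2 (R : realType) (k : nat) : R := 4 - 4 / (1 + (k%:R) ^+ 2) ^+ 2.

Lemma circ_off (R : realType) (k : nat) (i j : 'I_k) : i != j ->
  (ua (i%:R : R) + ua j%:R) ^+ 2 + (ub (i%:R : R) + ub j%:R) ^+ 2 <= T2 R k.
Proof.
move=> nij; rewrite circ_id /T2.
set s : R := i%:R; set r : R := j%:R; set K : R := 1 + k%:R ^+ 2.
have s0 : 0 <= s by rewrite /s ler0n.
have r0 : 0 <= r by rewrite /r ler0n.
have sk : s <= k%:R by rewrite /s ler_nat ltnW.
have rk : r <= k%:R by rewrite /r ler_nat ltnW.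
have sr : 1 <= (s - r) ^+ 2.
  have : (val i != val j) by [].
  case: ltngtP => // h _.
    have : s + 1 <= r by rewrite /s /r natr1 ler_nat.
    nra.
  have : r + 1 <= s by rewrite /s /r natr1 ler_nat.
  nra.
set D := (1 + s ^+ 2) * (1 + r ^+ 2).
have D0 : 0 < D by rewrite /D mulr_gt0 //; nra.
have K0 : 0 < K ^+ 2 by rewrite /K exprn_gt0 //; nra.
have s2 : s ^+ 2 <= k%:R ^+ 2 by rewrite ler_sqr // ?nnegrE // ler0n.
have r2 : r ^+ 2 <= k%:R ^+ 2 by rewrite ler_sqr // ?nnegrE // ler0n.
have DK : D <= K ^+ 2.
  rewrite /D /K expr2; apply: ler_pM; rewrite ?lerD2l //; nra.
set X := (s - r) ^+ 2 / D.
have XD : X * D = (s - r) ^+ 2 by rewrite /X divfK // lt0r_neq0.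
set Y := 4 / K ^+ 2.
have YK : Y * K ^+ 2 = 4 by rewrite /Y divfK // lt0r_neq0.
have -> : 4 * (s - r) ^+ 2 / D = 4 * X by rewrite /X mulrA.
have X0 : 0 <= X by rewrite /X divr_ge0 ?sqr_ge0 // ltW.
nra.
Qed.

Lemma T2_bounds (R : realType) (k : nat) : 0 <= T2 R k < 4.
Proof.
rewrite /T2; set K : R := 1 + k%:R ^+ 2.
have K1 : 1 <= K by rewrite /K; have := sqr_ge0 (k%:R : R); lra.
have K0 : 0 < K ^+ 2 by rewrite exprn_gt0 //; lra.
set Y := 4 / K ^+ 2.
have YK : Y * K ^+ 2 = 4 by rewrite /Y divfK // lt0r_neq0.
have Y0 : 0 < Y by rewrite /Y divr_gt0.
apply/andP; split; nra.
Qed.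



Lemma sqrt4 (R : realType) : Num.sqrt (4 : R) = 2.
Proof. by rewrite (_ : 4 = 2 ^+ 2) ?sqrtr_sqr ?ger0_norm //; rewrite expr2; lra. Qed.

Lemma mink_std (R : realType) n (hn : (2 <= n)%N) (k : nat) :
  exists (a b : 'I_k -> mpoint R n),
    (forall i j, i <> j -> causal_le (a i) (b j)) /\ (forall i, ~ causal_le (a i) (b i)) /\
    (forall i, (a i).1 = 0 /\ enorm (a i).2 <= 1) /\
    (forall j, 0 <= (b j).1 <= 2 /\ enorm (b j).2 <= 1).
Proof.
have [T0 T4] := andP (T2_bounds R k).
pose tt := Num.sqrt (T2 R k).
exists (fun i => ((0 : R), @v2 R n (ua (i%:R)) (ub (i%:R)))).
exists (fun j => (tt, @v2 R n (- ua (j%:R)) (- ub (j%:R)))).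
have key : forall i j : 'I_k, causal_le ((0 : R), @v2 R n (ua (i%:R)) (ub (i%:R)))
    (tt, @v2 R n (- ua (j%:R)) (- ub (j%:R))) <->
    (ua (j%:R : R) + ua i%:R) ^+ 2 + (ub (j%:R : R) + ub i%:R) ^+ 2 <= T2 R k.
  move=> i j; rewrite /causal_le /=.
  rewrite (@enorm_ext _ _ _ (@v2 R n (- (ua (j%:R : R) + ua i%:R)) (- (ub (j%:R : R) + ub i%:R)))); last first.
    by move=> l; rewrite /v2; case: ifP => _; [|case: ifP => _]; rewrite ?subrr //; ring.
  by rewrite enorm_v2 // !sqrrN subr0 /tt ler_sqrt.
split.
  move=> i j nij; apply/key; apply: circ_off; apply/eqP => e; apply: nij; exact/esym.
split.
  move=> i /key h; have := circ_norm (i%:R : R); nra.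
split.
  by move=> i; split => //=; rewrite enorm_v2 // circ_norm sqrtr1.
move=> j; split; last by rewrite /= enorm_v2 // !sqrrN circ_norm sqrtr1.
rewrite /= /tt sqrtr_ge0 /= -(sqrt4 R) ler_sqrt; lra.
Qed.



Definition sh (R : realType) n (m : mpoint R n) (e : R) (x : mpoint R n) : mpoint R n :=
  (m.1 + e * x.1, fun i => m.2 i + e * x.2 i).

Lemma causal_sh (R : realType) n (m : mpoint R n) (e : R) (x y : mpoint R n) : 0 < e ->
  causal_le (sh m e x) (sh m e y) <-> causal_le x y.
Proof.
move=> e0; rewrite /causal_le /sh /=.
rewrite (@enorm_ext _ _ _ (fun i => e * (y.2 i - x.2 i))); last by move=> i; ring.
rewrite enorm_scale gtr0_norm // (_ : m.1 + e * y.1 - (m.1 + e * x.1) = e * (y.1 - x.1)); last by ring.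
by rewrite ler_pM2l.
Qed.

Lemma in_J (R : realType) n (p q : mpoint R n) : chron_lt p q ->
  exists m e, 0 < e /\ forall x : mpoint R n, 0 <= x.1 <= 2 -> enorm x.2 <= 1 ->
    causal_le p (sh m e x) /\ causal_le (sh m e x) q.
Proof.
rewrite /chron_lt => hpq.
pose m : mpoint R n := ((p.1 + q.1) / 2, fun i => (p.2 i + q.2 i) / 2).
pose T := (q.1 - p.1) / 2.
pose w := fun i => (q.2 i - p.2 i) / 2.
have Ww : enorm w = enorm (fun i => q.2 i - p.2 i) / 2.
  rewrite (@enorm_ext _ _ _ (fun i => 2^-1 * (q.2 i - p.2 i))); last by move=> i; rewrite /w mulrC.
  by rewrite enorm_scale gtr0_norm ?invr_gt0 // mulrC.
have WT : enorm w < T by rewrite Ww /T; lra.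
have W0 := enorm_ge0 w.
pose e := (T - enorm w) / 3.
have e0 : 0 < e by rewrite /e; lra.
have e3 : 3 * e = T - enorm w by rewrite /e; field.
exists m, e; split => // x /andP[x0 x2] xn.
have ex1 : 0 <= e * x.1 by apply: mulr_ge0; lra.
have ex2 : e * x.1 <= 2 * e by nra.
have ex : enorm (fun i => e * x.2 i) <= e.
  rewrite enorm_scale gtr0_norm //; rewrite -[X in _ <= X]mulr1; apply: ler_wpM2l; [exact: ltW | exact: xn].
have exn : enorm (fun i => - e * x.2 i) <= e.
  rewrite enorm_scale normrN gtr0_norm //; rewrite -[X in _ <= X]mulr1; apply: ler_wpM2l; [exact: ltW | exact: xn].
split; rewrite /causal_le /sh /=.
  rewrite (@enorm_ext _ _ _ (fun i => w i + e * x.2 i)); last by move=> i; rewrite /w; field.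
  have := enorm_triangle w (fun i => e * x.2 i).
  have : m.1 - p.1 = T by rewrite /T /=; field.
  rewrite /=; clearbody e; lra.
rewrite (@enorm_ext _ _ _ (fun i => w i + - e * x.2 i)); last by move=> i; rewrite /w; field.
have := enorm_triangle w (fun i => - e * x.2 i).
have : q.1 - m.1 = T by rewrite /T /=; field.
rewrite /=; clearbody e; lra.
Qed.

Lemma mink_has_std (R : realType) n (hn : (2 <= n)%N) : has_std (@causal_le R n).
Proof. by move=> k; have [a [b [h1 [h2 _]]]] := mink_std R hn k; exists a, b. Qed.

Lemma J_has_std (R : realType) n (hn : (2 <= n)%N) (p q : mpoint R n) :
  chron_lt p q -> has_std (Jle p q).
Proof.
move=> hpq k; have [m [e [e0 Hin]]] := in_J hpq.
have [a [b [h1 [h2 [ha hb]]]]] := mink_std R hn k.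
have pa : forall i, causal_le p (sh m e (a i)) /\ causal_le (sh m e (a i)) q.
  move=> i; have [a1 a2] := ha i; apply: Hin => //; rewrite a1 lexx /=; lra.
have pb : forall j, causal_le p (sh m e (b j)) /\ causal_le (sh m e (b j)) q.
  move=> j; have [b1 b2] := hb j; exact: Hin.
exists (fun i => exist _ (sh m e (a i)) (pa i)), (fun j => exist _ (sh m e (b j)) (pb j)).
split.
  move=> i j nij; rewrite /Jle /=; apply/(causal_sh _ _ _ e0); exact: h1.
by move=> i; rewrite /Jle /= (causal_sh _ _ _ e0); exact: h2.
Qed.

Lemma J_realizer_utility (R : realType) n (p q : mpoint R n) :
  (exists L : nat -> Jdiamond p q -> Jdiamond p q -> Prop,
      (forall i, total_order (L i)) /\ realizes (Jle p q) L) /\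
  (exists f : Jdiamond p q -> nat -> R, is_utility (Jle p q) f).
Proof.
have HU : is_utility (Jle p q) (fun a k => @mutil R n (proj1_sig a) k).
  by move=> a b; exact: mutil_utility.
split; last by eexists; exact: HU.
apply: (realizer_from_utility (key := fun a => mkey (proj1_sig a)) HU).
  move=> [a pa] [b pb] /= /mkey_inj e; subst b; congr exist; exact: proof_irrelevance.
by move=> a b h; apply: mkey_mono.
Qed.

Theorem mainTheorem5 (R : realType) (n : nat) (hn : (2 <= n)%N) :
  dimDM_aleph0 (@causal_le R n) /\
  dimHBG_aleph0 R (@causal_le R n) /\
  (forall p q : mpoint R n, chron_lt p q ->
     dimDM_aleph0 (Jle p q) /\ dimHBG_aleph0 R (Jle p q)) /\
  dimD_ge_aleph0 (@causal_le R n) /\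
  (forall p q : mpoint R n, chron_lt p q -> dimD_ge_aleph0 (Jle p q)).
Proof.
have HS := mink_has_std R hn.
split.
  split; last exact: std_no_realizer HS.
  apply: (realizer_from_utility (@mutil_utility R n) (@mkey_inj R n)).
  by move=> x y; apply: mkey_mono.
split.
  by split; [exists (@mutil R n); exact: mutil_utility | exact: (@std_no_utility _ _ HS R)].
split.
  move=> p q hpq; have HJ := J_has_std hn hpq.
  have [[L HL] [f Hf]] := J_realizer_utility p q.
  split; split.
  - by exists L.
  - exact: std_no_realizer HJ.
  - by exists f.
  - exact: (@std_no_utility _ _ HJ R).
split; first exact: std_no_debreu HS.
move=> p q hpq; exact: std_no_debreu (J_has_std hn hpq).
Qed.
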